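(* Let $\lambda$ be a singular cardinal. Then $\mathfrak{d}_\lambda>\lambda$, and moreover $\operatorname{cf}(\mathfrak{d}_\lambda)>\lambda$.
   Context: For $f,g\in{}^\lambda\lambda$, $f\le^* g$ means $|\{\beta<\lambda:f(\beta)>g(\beta)\}|<\lambda$ (size less than $\lambda$, not merely bounded). $\mathfrak{d}_\lambda$ is the minimal cardinality of a family $\mathcal{D}\subseteq{}^\lambda\lambda$ such that every $f\in{}^\lambda\lambda$ satisfies $f\le^* g$ for some $g\in\mathcal{D}$. *)

(* Defs.v *)
(* cardinals are modelled by types, compared via injections. *)
From Stdlib Require Import Relations Wellfounded.

Definition card_le (A B : Type) : Prop := exists f : A -> B, forall x y, f x = f y -> x = y.
Definition card_lt (A B : Type) : Prop := card_le A B /\ ~ card_le B A.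

(* lt is a well-order on L making (L, lt) an initial ordinal, i.e. a cardinal:
   every proper initial segment has strictly smaller cardinality. *)
Definition initial_ordinal {L : Type} (lt : L -> L -> Prop) : Prop :=
  well_founded lt /\
  (forall x, ~ lt x x) /\
  (forall x y z, lt x y -> lt y z -> lt x z) /\
  (forall x y, lt x y \/ x = y \/ lt y x) /\
  (forall x, card_lt {y : L | lt y x} L).

Definition cofinal {L : Type} (lt : L -> L -> Prop) (S : L -> Prop) : Prop :=
  forall x, exists y, S y /\ (x = y \/ lt x y).

Definition singular {L : Type} (lt : L -> L -> Prop) : Prop :=
  card_le nat L /\ exists S : L -> Prop, cofinal lt S /\ card_lt {y : L | S y} L.

Definition le_star {L : Type} (lt : L -> L -> Prop) (f g : L -> L) : Prop :=
  card_lt {b : L | lt (g b) (f b)} L.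

Definition dominating {L : Type} (lt : L -> L -> Prop) (D : (L -> L) -> Prop) : Prop :=
  forall f, exists g, D g /\ le_star lt f g.

(* Main.v *)
Require Import Defs.
From Stdlib Require Import Relations Wellfounded Classical ClassicalEpsilon FunctionalExtensionality PeanoNat Lia.

Definition WOrd {T} (lt : T -> T -> Prop) : Prop :=
  well_founded lt /\ (forall x, ~ lt x x) /\ (forall x y z, lt x y -> lt y z -> lt x z) /\
  (forall x y, lt x y \/ x = y \/ lt y x).

Lemma sig_ext {T} (P : T -> Prop) (a b : {x | P x}) : proj1_sig a = proj1_sig b -> a = b.
Proof. destruct a as [x px], b as [y py]; simpl; intros E; subst; f_equal; apply proof_irrelevance. Qed.

Lemma cle_refl A : card_le A A. Proof. exists (fun x => x); auto. Qed.
Lemma cle_trans A B C : card_le A B -> card_le B C -> card_le A C.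
Proof. intros [f Hf] [g Hg]; exists (fun x => g (f x)); auto. Qed.
Lemma cle_sub {T} (P Q : T -> Prop) : (forall x, P x -> Q x) -> card_le {x | P x} {x | Q x}.
Proof. intros H. exists (fun x => exist Q (proj1_sig x) (H _ (proj2_sig x))).
  intros a b E. apply sig_ext. apply (f_equal (@proj1_sig _ _)) in E. exact E. Qed.
Lemma cle_proj {T} (P : T -> Prop) : card_le {x | P x} T.
Proof. exists (@proj1_sig _ _). intros; apply sig_ext; auto. Qed.
Lemma cle_prod A B : card_le A B -> card_le (A*A) (B*B).
Proof. intros [f Hf]. exists (fun p => (f (fst p), f (snd p))).
  intros [a1 a2] [b1 b2] E; simpl in E; injection E; intros; f_equal; auto. Qed.
Lemma nlt_le {T} (P : T -> Prop) : ~ card_lt {x | P x} T -> card_le T {x | P x}.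
Proof. intros H. apply NNPP; intro N. apply H. split; auto. apply cle_proj. Qed.

Lemma wf_least {T} (lt:T->T->Prop) : well_founded lt -> forall P : T -> Prop,
  (exists x, P x) -> exists z, P z /\ forall w, P w -> ~ lt w z.
Proof.
  intros wf P [x Px]. apply NNPP; intro N.
  assert (forall y, ~ P y). { intro y. induction y as [y IH] using (well_founded_ind wf).
    intro Py. apply N. exists y. split; auto. intros w Pw Hw. exact (IH w Hw Pw). }
  exact (H x Px).
Qed.

Lemma fin_add {X} (P : X -> Prop) (c : X) : ~ card_le nat {x | P x} -> ~ card_le nat {x | P x \/ x = c}.
Proof.
  intros HP [h Hh]. apply HP.
  destruct (classic (exists n, proj1_sig (h n) = c)) as [[n0 Hn0]|Hno].
  - set (idx := fun m => if m <? n0 then m else S m).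
    assert (Hidx: forall m, idx m <> n0).
    { intro m; unfold idx; destruct (Nat.ltb_spec m n0); lia. }
    assert (Hii: forall a b, idx a = idx b -> a = b).
    { intros a b; unfold idx; destruct (Nat.ltb_spec a n0); destruct (Nat.ltb_spec b n0); lia. }
    assert (HP': forall m, P (proj1_sig (h (idx m)))).
    { intro m. destruct (proj2_sig (h (idx m))) as [p|e]; auto. exfalso. apply (Hidx m).
      apply Hh. apply sig_ext. congruence. }
    exists (fun m => exist P _ (HP' m)). intros a b E. apply (f_equal (@proj1_sig _ _)) in E.
    simpl in E. apply Hii, Hh, sig_ext, E.
  - assert (HP': forall m, P (proj1_sig (h m))).
    { intro m. destruct (proj2_sig (h m)) as [p|e]; auto. exfalso. apply Hno; eauto. }
    exists (fun m => exist P _ (HP' m)). intros a b E. apply (f_equal (@proj1_sig _ _)) in E.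
    simpl in E. apply Hh, sig_ext, E.
Qed.

Lemma fin_max {T} (lt:T->T->Prop) : WOrd lt ->
  ~ card_le nat T -> forall P : T -> Prop, (exists x, P x) -> exists z, P z /\ forall w, P w -> ~ lt z w.
Proof.
  intros [wf [irr [tr tri]]] Hfin P [x0 Px0]. apply NNPP; intro N.
  assert (Hnext: forall z, P z -> exists w, P w /\ lt z w).
  { intros z Pz. apply NNPP; intro N2. apply N. exists z. split; auto. intros w Pw Hzw. apply N2; eauto. }
  set (nx := fun z => epsilon (inhabits x0) (fun w => P w /\ lt z w)).
  assert (Hnx: forall z, P z -> P (nx z) /\ lt z (nx z)).
  { intros z Pz. unfold nx. apply (epsilon_spec (inhabits x0) (fun w => P w /\ lt z w)). auto. }
  set (u := fun n => nat_rect (fun _ => T) x0 (fun _ z => nx z) n).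
  assert (Hu: forall n, P (u n)). { induction n; simpl; auto. apply Hnx; auto. }
  assert (Hinc: forall m n, n < m -> lt (u n) (u m)).
  { induction m; intros n Hn; [lia|]. assert (lt (u m) (u (S m))) by (apply Hnx; auto).
    destruct (Nat.eq_dec n m); [subst; auto|]. eapply tr; [apply IHm; lia|auto]. }
  apply Hfin. exists u. intros n m E. destruct (Nat.lt_trichotomy n m) as [H|[H|H]]; auto; exfalso;
  apply Hinc in H; rewrite E in H; eapply irr; eauto.
Qed.

Lemma fin_biwo {X} (lx : X -> X -> Prop) : WOrd lx ->
  (forall P : X -> Prop, (exists x, P x) -> exists z, P z /\ forall w, P w -> ~ lx z w) -> ~ card_le nat X.
Proof.
  intros [wf [irr [tr tri]]] Hmax.
  assert (Q: forall z, ~ card_le nat {w | lx w z \/ w = z}).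
  { intro z. induction z as [z IH] using (well_founded_ind wf).
    apply fin_add.
    destruct (classic (exists w, lx w z)) as [Hne|Hemp].
    - destruct (Hmax _ Hne) as [m [Hm Hmm]].
      intro C. apply (IH m Hm). eapply cle_trans; [exact C|]. apply cle_sub.
      intros w Hw. destruct (tri w m) as [H|[H|H]]; auto. exfalso. exact (Hmm w Hw H).
    - intros [h _]. apply Hemp. exact (ex_intro _ _ (proj2_sig (h 0))). }
  intros [h Hh]. assert (Hne : exists x, (fun w => exists n, h n = w) x) by (exists (h 0); exists 0; reflexivity).
  destruct (Hmax _ Hne) as [M0 [_ HM]].
  assert (Hin: forall n, lx (h n) M0 \/ h n = M0).
  { intro n. destruct (tri (h n) M0) as [H|[H|H]]; auto. exfalso; apply (HM (h n)); eauto. }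
  apply (Q M0). exists (fun n => exist _ (h n) (Hin n)).
  intros a b E. apply Hh. apply (f_equal (@proj1_sig _ _)) in E; exact E.
Qed.

Definition lexo {T} (lt : T -> T -> Prop) (p q : T * T) : Prop :=
  lt (fst p) (fst q) \/ (fst p = fst q /\ lt (snd p) (snd q)).

Lemma fin_prod {T} (lt : T -> T -> Prop) : WOrd lt -> ~ card_le nat T -> ~ card_le nat (T * T).
Proof.
  intros HW Hfin. pose proof HW as [wf [irr [tr tri]]]. apply (fin_biwo (lexo lt)).
  - split; [|split; [|split]].
    + intro p. destruct p as [a b]. revert b. induction a as [a IHa] using (well_founded_ind wf).
      intro b. induction b as [b IHb] using (well_founded_ind wf).
      constructor. intros [c d] [H|[E H]]; simpl in *; [apply IHa; auto|subst; apply IHb; auto].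
    + intros [a b] [H|[_ H]]; eapply irr; eauto.
    + intros [a1 a2] [b1 b2] [c1 c2]; unfold lexo; simpl; intros [H|[E H]] [H'|[E' H']]; subst; eauto.
    + intros [a1 a2] [b1 b2]; unfold lexo; simpl.
      destruct (tri a1 b1) as [H|[H|H]]; auto. subst.
      destruct (tri a2 b2) as [H|[H|H]]; subst; auto.
  - intros P [[x1 x2] Px].
    assert (N1 : exists a, (fun a => exists b, P (a, b)) a) by (exists x1; exists x2; exact Px).
    destruct (fin_max lt HW Hfin _ N1) as [a [[b0 Hb0] Ha]].
    assert (N2 : exists b, (fun b => P (a, b)) b) by (exists b0; exact Hb0).
    destruct (fin_max lt HW Hfin _ N2) as [b [Hb Hbm]].
    exists (a, b). split; auto. intros [c d] Pw [H|[E H]]; simpl in *.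
    + apply (Ha c); eauto.
    + subst. apply (Hbm d); auto.
Qed.

Definition leo {T} (lt : T -> T -> Prop) a b := lt a b \/ a = b.
Definition mx {T} (lt : T -> T -> Prop) (a b : T) : T :=
  if excluded_middle_informative (lt a b) then b else a.
Definition Mp {T} (lt : T -> T -> Prop) (p : T * T) := mx lt (fst p) (snd p).
Definition Gam {T} (lt : T -> T -> Prop) (q p : T * T) :=
  lt (Mp lt q) (Mp lt p) \/ (Mp lt q = Mp lt p /\
   (lt (fst q) (fst p) \/ (fst q = fst p /\ lt (snd q) (snd p)))).

Lemma mx_ge1 {T} (lt : T -> T -> Prop) a b : leo lt a (mx lt a b).
Proof. unfold mx, leo. destruct excluded_middle_informative; auto. Qed.
Lemma mx_ge2 {T} (lt : T -> T -> Prop) a b : WOrd lt -> leo lt b (mx lt a b).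
Proof. intros [_ [_ [_ tri]]]. unfold mx, leo. destruct excluded_middle_informative; auto.
  destruct (tri a b) as [H|[H|H]]; subst; auto; contradiction. Qed.
Lemma leo_trans {T} (lt : T -> T -> Prop) a b c : WOrd lt -> leo lt a b -> leo lt b c -> leo lt a c.
Proof. intros [_ [_ [tr _]]] [H|H] [H'|H']; subst; unfold leo; eauto. Qed.
Lemma lt_leo {T} (lt : T -> T -> Prop) a b c : WOrd lt -> lt a b -> leo lt b c -> lt a c.
Proof. intros [_ [_ [tr _]]] H [H'|H']; subst; eauto. Qed.

Lemma Gam_bound {T} (lt : T -> T -> Prop) q p : WOrd lt -> Gam lt q p ->
  leo lt (fst q) (Mp lt p) /\ leo lt (snd q) (Mp lt p).
Proof.
  intros HW H. assert (HM : leo lt (Mp lt q) (Mp lt p)).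
  { destruct H as [H|[H _]]; unfold leo; auto. }
  split; eapply leo_trans; eauto; unfold Mp; [apply mx_ge1|apply mx_ge2; auto].
Qed.

Lemma Gam_wf {T} (lt : T -> T -> Prop) : WOrd lt -> well_founded (Gam lt).
Proof.
  intros [wf [irr [tr tri]]].
  assert (K: forall m a b p, Mp lt p = m -> fst p = a -> snd p = b -> Acc (Gam lt) p).
  { intro m. induction m as [m IHm] using (well_founded_ind wf).
    intro a. induction a as [a IHa] using (well_founded_ind wf).
    intro b. induction b as [b IHb] using (well_founded_ind wf).
    intros p E1 E2 E3. constructor. intros q [H|[E [H|[E' H]]]]; subst.
    - eapply IHm; eauto.
    - eapply IHa; eauto.
    - eapply IHb; eauto. }
  intro p. eapply K; eauto.
Qed.

Lemma Gam_trans {T} (lt : T -> T -> Prop) a b c : WOrd lt -> Gam lt a b -> Gam lt b c -> Gam lt a c.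
Proof.
  intros [wf [irr [tr tri]]]. unfold Gam.
  intros [H|[E [H|[E' H]]]] [H2|[E2 [H2|[E2' H2]]]].
  - left; eauto.
  - left; rewrite <- E2; auto.
  - left; rewrite <- E2; auto.
  - left; rewrite E; auto.
  - right; split; [congruence|]. left; eauto.
  - right; split; [congruence|]. left; rewrite <- E2'; auto.
  - left; rewrite E; auto.
  - right; split; [congruence|]. left; rewrite E'; auto.
  - right; split; [congruence|]. right; split; [congruence|eauto].
Qed.

Lemma Gam_tri {T} (lt : T -> T -> Prop) p q : WOrd lt -> Gam lt p q \/ p = q \/ Gam lt q p.
Proof.
  intros [wf [irr [tr tri]]]. unfold Gam.
  destruct (tri (Mp lt p) (Mp lt q)) as [H|[H|H]]; [auto| |auto].
  destruct (tri (fst p) (fst q)) as [H1|[H1|H1]]; [left; right; auto| |right; right; right; auto].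
  destruct (tri (snd p) (snd q)) as [H2|[H2|H2]]; [left; right; auto| |right; right; right; auto].
  right; left. destruct p, q; simpl in *; congruence.
Qed.

Definition Fbody {T} (lt : T -> T -> Prop) (t0 : T) (p : T * T) (rec : forall q, Gam lt q p -> T) : T :=
  epsilon (inhabits t0) (fun z => (forall q (H : Gam lt q p), lt (rec q H) z) /\
     forall w, (forall q (H : Gam lt q p), lt (rec q H) w) -> ~ lt w z).

Definition Ffun {T} (lt : T -> T -> Prop) (t0 : T) (wfG : well_founded (Gam lt)) : T * T -> T :=
  Fix wfG (fun _ => T) (Fbody lt t0).

Lemma Ffun_eq {T} (lt : T -> T -> Prop) t0 wfG p :
  Ffun lt t0 wfG p = Fbody lt t0 p (fun q _ => Ffun lt t0 wfG q).
Proof.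
  unfold Ffun.
  assert (EXT : forall (x : T * T) (f g : forall y : T * T, Gam lt y x -> T),
     (forall (y : T * T) (p : Gam lt y x), f y p = g y p) -> Fbody lt t0 x f = Fbody lt t0 x g).
  { intros x f g H. assert (f = g) as ->; [|reflexivity].
    apply functional_extensionality_dep; intro y. apply functional_extensionality_dep; intro h. auto. }
  exact (@Fix_eq _ _ wfG (fun _ => T) (Fbody lt t0) EXT p).
Qed.

Lemma hess_core {T} (lt : T -> T -> Prop) (t0 : T) : WOrd lt ->
  (forall s, ~ card_le T {p : T * T | leo lt (fst p) s /\ leo lt (snd p) s}) -> card_le (T * T) T.
Proof.
  intros HW Hs. pose proof HW as [wf [irr [tr tri]]].
  pose (wfG := Gam_wf lt HW). pose (F := Ffun lt t0 wfG).
  assert (C: forall p, (forall q, Gam lt q p -> lt (F q) (F p)) /\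
                       (forall w, lt w (F p) -> exists q, Gam lt q p /\ F q = w)).
  { intro p. induction p as [p IH] using (well_founded_ind wfG).
    assert (Hdc: forall w v, lt w v -> (exists q, Gam lt q p /\ F q = v) -> exists q, Gam lt q p /\ F q = w).
    { intros w v Hwv [q [Hq Eq]]. subst v. destruct (proj2 (IH q Hq) w Hwv) as [q' [Hq' E']].
      exists q'; split; auto. eapply Gam_trans; eauto. }
    assert (Hub: forall w, ~ (exists q, Gam lt q p /\ F q = w) -> forall q, Gam lt q p -> lt (F q) w).
    { intros w Nw q Hq. destruct (tri (F q) w) as [H|[H|H]]; auto; exfalso; apply Nw.
      - exists q; auto.
      - eapply Hdc; eauto. }
    assert (Hex: exists w, ~ (exists q, Gam lt q p /\ F q = w)).
    { apply NNPP; intro N. apply (Hs (Mp lt p)).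
      assert (HI: forall w, exists q, Gam lt q p /\ F q = w) by (intro w; apply NNPP; intro; apply N; eauto).
      pose (ch := fun w => epsilon (inhabits (t0,t0)) (fun q => Gam lt q p /\ F q = w)).
      assert (Hch: forall w, Gam lt (ch w) p /\ F (ch w) = w).
      { intro w. apply (epsilon_spec (inhabits (t0,t0)) (fun q => Gam lt q p /\ F q = w)). apply HI. }
      exists (fun w => exist _ (ch w) (Gam_bound lt _ _ HW (proj1 (Hch w)))).
      intros x y E. apply (f_equal (@proj1_sig _ _)) in E. simpl in E.
      rewrite <- (proj2 (Hch x)), <- (proj2 (Hch y)), E. reflexivity. }
    destruct Hex as [w0 Hw0].
    assert (Hspec: (forall q, Gam lt q p -> lt (F q) (F p)) /\
                   (forall w, (forall q, Gam lt q p -> lt (F q) w) -> ~ lt w (F p))).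
    { unfold F. rewrite Ffun_eq. unfold Fbody.
      apply (epsilon_spec (inhabits t0) (fun z => (forall q (H : Gam lt q p), lt (Ffun lt t0 wfG q) z) /\
       forall w, (forall q (H : Gam lt q p), lt (Ffun lt t0 wfG q) w) -> ~ lt w z)).
      apply (wf_least lt wf). exists w0. exact (Hub w0 Hw0). }
    split; [exact (proj1 Hspec)|].
    intros w Hw. apply NNPP; intro N. exact (proj2 Hspec w (Hub w N) Hw). }
  exists F. intros p q E. destruct (Gam_tri lt p q HW) as [H|[H|H]]; auto; exfalso.
  - apply (proj1 (C q)) in H. rewrite E in H. eapply irr; eauto.
  - apply (proj1 (C p)) in H. rewrite E in H. eapply irr; eauto.
Qed.

Lemma WOrd_sub {T} (lt : T -> T -> Prop) (P : T -> Prop) : WOrd lt ->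
  WOrd (fun a b : {x | P x} => lt (proj1_sig a) (proj1_sig b)).
Proof.
  intros [wf [irr [tr tri]]]. split; [|split; [|split]].
  - apply (wf_inverse_image _ _ lt (@proj1_sig _ _)); auto.
  - intros; apply irr.
  - intros; eauto.
  - intros a b. destruct (tri (proj1_sig a) (proj1_sig b)) as [H|[H|H]]; auto.
    right; left; apply sig_ext; auto.
Qed.

Lemma nomax {T} (lt : T -> T -> Prop) : WOrd lt -> card_le nat T ->
  (forall x, ~ card_le T {y | lt y x}) -> forall m, exists t, lt m t.
Proof.
  intros [wf [irr [tr tri]]] [j Hj] Hseg m. apply NNPP; intro N.
  assert (Hlt: forall t, t <> m -> lt t m).
  { intros t Ht. destruct (tri t m) as [H|[H|H]]; [auto|contradiction|exfalso; apply N; eauto]. }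
  pose (j' := fun n => if excluded_middle_informative (j (2*n) = m) then j (2*n+1) else j (2*n)).
  assert (Hj'm: forall n, j' n <> m).
  { intro n; unfold j'; destruct excluded_middle_informative as [E|E]; auto.
    intro E2. rewrite <- E2 in E. apply Hj in E. lia. }
  assert (Hj'inj: forall a b, j' a = j' b -> a = b).
  { intros a b; unfold j'; destruct excluded_middle_informative; destruct excluded_middle_informative;
    intro E; apply Hj in E; lia. }
  pose (g := fun y => if excluded_middle_informative (y = m) then j' 0 else
     if excluded_middle_informative (exists n, j' n = y)
     then j' (S (epsilon (inhabits 0) (fun n => j' n = y))) else y).
  assert (Hg: forall y, lt (g y) m).
  { intro y; apply Hlt; unfold g.
    destruct excluded_middle_informative; auto. destruct excluded_middle_informative; auto. }
  assert (Heps: forall y, (exists n, j' n = y) -> j' (epsilon (inhabits 0) (fun n => j' n = y)) = y).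
  { intros y H. apply (epsilon_spec (inhabits 0) (fun n => j' n = y)); auto. }
  apply (Hseg m). exists (fun y => exist _ (g y) (Hg y)).
  intros a b E. apply (f_equal (@proj1_sig _ _)) in E; simpl in E. unfold g in E.
  destruct (excluded_middle_informative (a = m)) as [Ea|Ea];
  destruct (excluded_middle_informative (b = m)) as [Eb|Eb]; try congruence.
  - destruct excluded_middle_informative as [Hb|Hb].
    + apply Hj'inj in E. discriminate.
    + exfalso; apply Hb; eauto.
  - destruct excluded_middle_informative as [Ha|Ha].
    + apply Hj'inj in E. discriminate.
    + exfalso; apply Ha; eauto.
  - destruct (excluded_middle_informative (exists n, j' n = a)) as [Ha|Ha];
    destruct (excluded_middle_informative (exists n, j' n = b)) as [Hb|Hb].
    + apply Hj'inj in E. injection E; intro E'. rewrite <- (Heps a Ha), <- (Heps b Hb), E'. reflexivity.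
    + exfalso; apply Hb; eauto.
    + exfalso; apply Ha; eauto.
    + exact E.
Qed.

Lemma step {T} (lt : T -> T -> Prop) : WOrd lt -> card_le nat T ->
  (forall x, ~ card_le T {y | lt y x}) ->
  (forall t, card_le nat {y | lt y t} -> card_le ({y | lt y t} * {y | lt y t}) {y | lt y t}) ->
  card_le (T * T) T.
Proof.
  intros HW Hj Hseg IH. pose proof HW as [wf [irr [tr tri]]].
  destruct Hj as [j Hjj].
  apply (hess_core lt (j 0) HW). intros s Hc.
  destruct (nomax lt HW (ex_intro _ j Hjj) Hseg s) as [t Hst].
  assert (Hin: forall a, leo lt a s -> lt a t).
  { intros a [H|H]; subst; eauto. }
  assert (Hsub: card_le {p : T * T | leo lt (fst p) s /\ leo lt (snd p) s} ({y | lt y t} * {y | lt y t})).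
  { exists (fun p => (exist _ (fst (proj1_sig p)) (Hin _ (proj1 (proj2_sig p))),
                     exist _ (snd (proj1_sig p)) (Hin _ (proj2 (proj2_sig p))))).
    intros [[a1 a2] pa] [[b1 b2] pb] E. injection E. intros; subst. apply sig_ext. reflexivity. }
  destruct (classic (card_le nat {y | lt y t})) as [Hinf|Hfin].
  - apply (Hseg t). eapply cle_trans; [exact Hc|]. eapply cle_trans; [exact Hsub|]. apply IH; auto.
  - apply (fin_prod _ (WOrd_sub lt (fun y => lt y t) HW) Hfin).
    eapply cle_trans; [exists j; exact Hjj|]. eapply cle_trans; [exact Hc|exact Hsub].
Qed.

Lemma seg_iso1 {T} (lt : T -> T -> Prop) x (s : {y | lt y x}) :
  card_le {w : {y | lt y x} | lt (proj1_sig w) (proj1_sig s)} {y | lt y (proj1_sig s)}.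
Proof.
  exists (fun w : {w : {y | lt y x} | lt (proj1_sig w) (proj1_sig s)} =>
     exist (fun y => lt y (proj1_sig s)) (proj1_sig (proj1_sig w)) (proj2_sig w)).
  intros a b E. apply sig_ext, sig_ext. apply (f_equal (@proj1_sig _ _)) in E. exact E.
Qed.

Lemma seg_iso2 {T} (lt : T -> T -> Prop) x (s : {y | lt y x}) : WOrd lt ->
  card_le {y | lt y (proj1_sig s)} {w : {y | lt y x} | lt (proj1_sig w) (proj1_sig s)}.
Proof.
  intros [wf [irr [tr tri]]].
  assert (H: forall y, lt y (proj1_sig s) -> lt y x) by (intros; eapply tr; eauto; exact (proj2_sig s)).
  exists (fun y => exist (fun w : {y | lt y x} => lt (proj1_sig w) (proj1_sig s))
                    (exist _ (proj1_sig y) (H _ (proj2_sig y))) (proj2_sig y)).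
  intros a b E. apply (f_equal (@proj1_sig _ _)) in E. apply (f_equal (@proj1_sig _ _)) in E.
  apply sig_ext; exact E.
Qed.

Lemma hess {T} (lt : T -> T -> Prop) : WOrd lt -> card_le nat T ->
  (forall x, ~ card_le T {y | lt y x}) -> card_le (T * T) T.
Proof.
  intros HW Hj Hseg. pose proof HW as [wf [irr [tr tri]]].
  assert (P: forall x, card_le nat {y | lt y x} -> card_le ({y | lt y x} * {y | lt y x}) {y | lt y x}).
  { intro x. induction x as [x IH] using (well_founded_ind wf). intros Hx.
    assert (Hne : exists c, (fun c => card_le {y | lt y x} {y | lt y c}) c) by (exists x; apply cle_refl).
    destruct (wf_least lt wf _ Hne) as [c [Hc Hcmin]].
    destruct (tri c x) as [Hcx|[Hcx|Hcx]].
    - pose proof (IH c Hcx (cle_trans _ _ _ Hx Hc)) as Pc.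
      eapply cle_trans; [apply cle_prod, Hc|]. eapply cle_trans; [exact Pc|].
      apply cle_sub. intros; eauto.
    - subst c. apply (step (fun a b : {y | lt y x} => lt (proj1_sig a) (proj1_sig b))).
      + apply WOrd_sub; auto.
      + exact Hx.
      + intros s Hs. apply (Hcmin (proj1_sig s)); [| exact (proj2_sig s)].
        eapply cle_trans; [exact Hs|]. apply seg_iso1.
      + intros t Ht.
        pose proof (IH (proj1_sig t) (proj2_sig t) (cle_trans _ _ _ Ht (seg_iso1 lt x t))) as Pt.
        eapply cle_trans; [apply cle_prod, seg_iso1|]. eapply cle_trans; [exact Pt|].
        apply seg_iso2; auto.
    - exfalso. exact (Hcmin x (cle_refl _) Hcx). }
  apply (step lt); auto.
Qed.

Theorem claim3p2 (L : Type) (lt : L -> L -> Prop)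
  (Hcard : initial_ordinal lt) (Hsing : singular lt) :
  (forall D, dominating lt D -> ~ card_le {g : L -> L | D g} L) /\
  (forall D, dominating lt D ->
     (forall D', dominating lt D' -> card_le {g : L -> L | D g} {g : L -> L | D' g}) ->
     forall R : {g : L -> L | D g} -> {g : L -> L | D g} -> Prop,
       initial_ordinal R ->
       forall S, cofinal R S -> ~ card_le {x : {g : L -> L | D g} | S x} L).
Proof.
  destruct Hcard as [wf [irr [tr [tri Hsg]]]].
  assert (HW : WOrd lt) by exact (conj wf (conj irr (conj tr tri))).
  assert (Hseg : forall x, ~ card_le L {y | lt y x}) by (intros x H; exact (proj2 (Hsg x) H)).
  destruct Hsing as [Hj _].
  destruct (hess lt HW Hj Hseg) as [phi Hphi].
  pose proof Hj as [j _]. pose (t0 := j 0).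
  pose (sc := fun m => epsilon (inhabits t0) (fun t => lt m t)).
  assert (Hsc : forall m, lt m (sc m)).
  { intro m. apply (epsilon_spec (inhabits t0) (fun t => lt m t)). apply (nomax lt HW Hj Hseg). }
  pose (pinv := fun b => epsilon (inhabits (t0, t0)) (fun p => phi p = b)).
  assert (Hpinv : forall a c, pinv (phi (a, c)) = (a, c)).
  { intros a c. apply Hphi. apply (epsilon_spec (inhabits (t0, t0)) (fun p => phi p = phi (a, c))). eauto. }
  assert (Hphi_inj : forall a c c', phi (a, c) = phi (a, c') -> c = c').
  { intros a c c' E. apply Hphi in E. injection E; auto. }
  split.
  - intros D HD [e He].
    destruct (HD (fun _ => t0)) as [g0 [Hg0 _]].
    pose (ginv := fun a => epsilon (inhabits (exist D g0 Hg0)) (fun g => e g = a)).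
    pose (f := fun b => sc (proj1_sig (ginv (fst (pinv b))) b)).
    destruct (HD f) as [g [Dg Hle]].
    pose (gg := exist D g Dg).
    assert (Hginv : ginv (e gg) = gg).
    { apply He. apply (epsilon_spec (inhabits (exist D g0 Hg0)) (fun g => e g = e gg)). eauto. }
    assert (Hk : forall c, lt (g (phi (e gg, c))) (f (phi (e gg, c)))).
    { intro c. unfold f. rewrite Hpinv. simpl. rewrite Hginv. apply Hsc. }
    apply (proj2 Hle). exists (fun c => exist _ (phi (e gg, c)) (Hk c)).
    intros a c E. apply (f_equal (@proj1_sig _ _)) in E. simpl in E. eapply Hphi_inj; eauto.
  - intros D HD Hmin R HR S HS [e He].
    destruct HR as [_ [_ [_ [_ HRs]]]].
    destruct (HD (fun _ => t0)) as [g0 [Hg0 _]].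
    pose (gg0 := exist D g0 Hg0).
    destruct (HS gg0) as [y0 [Sy0 _]].
    pose (s0 := exist S y0 Sy0).
    pose (Dp := fun (s : {x | S x}) (h : L -> L) =>
           exists g : {g | D g}, R g (proj1_sig s) /\ h = (fun a => proj1_sig g (phi (e s, a)))).
    assert (Hnd : forall s, exists k, forall h, Dp s h -> ~ le_star lt k h).
    { intro s. apply NNPP; intro N. apply (proj2 (HRs (proj1_sig s))).
      eapply cle_trans; [apply (Hmin (Dp s))|].
      - intros k. apply NNPP; intro N2; apply N; exists k; intros h Hh Hl; apply N2; eauto.
      - pose (pk := fun h => epsilon (inhabits gg0)
             (fun g => R g (proj1_sig s) /\ h = (fun a => proj1_sig g (phi (e s, a))))).
        assert (Hpk : forall h, Dp s h -> R (pk h) (proj1_sig s) /\ h = (fun a => proj1_sig (pk h) (phi (e s, a)))).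
        { intros h Hh. apply (epsilon_spec (inhabits gg0)
             (fun g => R g (proj1_sig s) /\ h = (fun a => proj1_sig g (phi (e s, a))))). exact Hh. }
        exists (fun h => exist (fun g => R g (proj1_sig s)) (pk (proj1_sig h)) (proj1 (Hpk _ (proj2_sig h)))).
        intros h1 h2 E. apply (f_equal (@proj1_sig _ _)) in E. cbn beta iota in E.
        apply sig_ext. pose proof (proj2 (Hpk _ (proj2_sig h1))) as E1.
        pose proof (proj2 (Hpk _ (proj2_sig h2))) as E2.
        assert (E' : pk (proj1_sig h1) = pk (proj1_sig h2)) by exact E.
        rewrite E1, E2. clear E1 E2. rewrite E'. reflexivity. }
    pose (K := fun s => epsilon (inhabits (fun _ : L => t0)) (fun k => forall h, Dp s h -> ~ le_star lt k h)).
    assert (HK : forall s h, Dp s h -> ~ le_star lt (K s) h).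
    { intro s. apply (epsilon_spec (inhabits (fun _ : L => t0)) (fun k => forall h, Dp s h -> ~ le_star lt k h)).
      apply Hnd. }
    pose (sinv := fun a => epsilon (inhabits s0) (fun s => e s = a)).
    assert (Hsinv : forall s, sinv (e s) = s).
    { intro s. apply He. apply (epsilon_spec (inhabits s0) (fun s' => e s' = e s)). eauto. }
    pose (f := fun b => mx lt (K (sinv (fst (pinv b))) (snd (pinv b)))
                        (sc (proj1_sig (proj1_sig (sinv (fst (pinv b)))) b))).
    destruct (HD f) as [g [Dg Hle]].
    pose (gg := exist D g Dg).
    destruct (HS gg) as [y [Sy Hy]].
    pose (s := exist S y Sy).
    assert (Hf : forall c, f (phi (e s, c)) = mx lt (K s c) (sc (proj1_sig y (phi (e s, c))))).
    { intro c. unfold f. rewrite Hpinv. simpl. rewrite Hsinv. reflexivity. }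
    apply (proj2 Hle). destruct Hy as [Ey|Ry].
    + assert (Hk : forall c, lt (g (phi (e s, c))) (f (phi (e s, c)))).
      { intro c. rewrite Hf. eapply lt_leo; [exact HW| |apply mx_ge2; exact HW].
        assert (g = proj1_sig y) as -> by (rewrite <- Ey; reflexivity). apply Hsc. }
      exists (fun c => exist _ (phi (e s, c)) (Hk c)).
      intros a c E. apply (f_equal (@proj1_sig _ _)) in E. simpl in E. eapply Hphi_inj; eauto.
    + pose (h := fun a => g (phi (e s, a))).
      assert (Dh : Dp s h) by (exists gg; split; [exact Ry|reflexivity]).
      pose proof (nlt_le _ (HK s h Dh)) as [u Hu].
      assert (Hk : forall c, lt (h (proj1_sig (u c))) (K s (proj1_sig (u c)))) by (intro c; exact (proj2_sig (u c))).
      assert (Hk' : forall c, lt (g (phi (e s, proj1_sig (u c)))) (f (phi (e s, proj1_sig (u c))))).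
      { intro c. rewrite Hf. eapply lt_leo; [exact HW|apply Hk|apply mx_ge1]. }
      exists (fun c => exist _ (phi (e s, proj1_sig (u c))) (Hk' c)).
      intros a c E. apply (f_equal (@proj1_sig _ _)) in E. simpl in E.
      apply Hphi_inj in E. apply Hu, sig_ext, E.
Qed.
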